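(* There are at least $2^{\aleph_0}$ many continuous injective maps $M(\mathbb R(x))\to M(\mathbb R(x,y))$, all of them compatible with restriction and having mutually disjoint images.
   Context: $\mathbb R(x,y)$ is the rational function field in two variables over $\mathbb R$. For a field $K$, $M(K)$ is the set of $\mathbb R$-places $K\to\mathbb R\cup\{\infty\}$, with topology generated by the subbasis $H'(b)=\{\zeta\in M(K)\mid \infty\ne\zeta(b)>0\}$, $b\in K$. A map $\iota:M(\mathbb R(x))\to M(\mathbb R(x,y))$ is compatible with restriction if $\iota(\zeta)|_{\mathbb R(x)}=\zeta$ for all $\zeta$. *)

(* Defs.v *)
From HB Require Import structures.
From mathcomp Require Import all_boot all_order all_algebra.
From mathcomp Require Import fraction Rstruct.
From Stdlib Require Import Reals.

Set Implicit Arguments.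
Unset Strict Implicit.
Unset Printing Implicit Defensive.
Import Order.TTheory GRing.Theory Num.Theory.
Local Open Scope ring_scope.

Definition Rx : fieldType := {fraction {poly R}}.
(* R(x,y) realised as R(x)(y) = Frac(R(x)[y]). *)
Definition Rxy : fieldType := {fraction {poly Rx}}.

Definition emb_xy (f : Rx) : Rxy := tofrac (f%:P).

(* An R-place K -> R ∪ {∞}; [None] stands for ∞.
   O := { a | z a <> ∞ } is a subring, z restricted to O is a ring morphism,
   and for a <> 0 : z a = ∞ iff z (a^-1) = 0 (valuation ring + kernel = max ideal). *)
Definition is_Rplace (K : fieldType) (z : K -> option R) : Prop :=
  z 1 = Some 1 /\
  (forall (a b : K) (u v : R), z a = Some u -> z b = Some v ->
       z (a + b) = Some (u + v) /\ z (a * b) = Some (u * v)) /\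
  (forall a : K, a != 0 -> (z a = None <-> z a^-1 = Some 0)).

Definition M (K : fieldType) := {z : K -> option R | is_Rplace z}.

Definition H' (K : fieldType) (b : K) (z : M K) : Prop :=
  exists r : R, proj1_sig z b = Some r /\ 0 < r.

(* Open sets of the topology generated by the subbasis {H'(b) | b in K}:
   every point of U lies in a finite intersection of subbasic sets inside U. *)
Definition M_open (K : fieldType) (U : M K -> Prop) : Prop :=
  forall z, U z -> exists s : seq K,
    (forall b, b \in s -> H' b z) /\
    (forall z', (forall b, b \in s -> H' b z') -> U z').

Definition M_continuous (K L : fieldType) (f : M K -> M L) : Prop :=
  forall U : M L -> Prop, M_open U -> M_open (fun z => U (f z)).

Definition compatible_restr (iota : M Rx -> M Rxy) : Prop :=
  forall z : M Rx, (fun f : Rx => proj1_sig (iota z) (emb_xy f)) = proj1_sig z.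

(* Main.v *)
Require Import Defs.
From HB Require Import structures.
From mathcomp Require Import all_boot all_order all_algebra.
From mathcomp Require Import fraction Rstruct.
From Stdlib Require Import Reals.
From mathcomp Require Import generic_quotient ring lra.
From Stdlib Require Import ClassicalEpsilon ProofIrrelevance FunctionalExtensionality Classical.
From mathcomp Require classical_sets reals.

Set Implicit Arguments.
Unset Strict Implicit.
Unset Printing Implicit Defensive.
Import Order.TTheory GRing.Theory Num.Theory.
Local Open Scope ring_scope.

Lemma frac_rep (R : idomainType) (x : {fraction R}) : exists p q, q != 0 /\ x = tofrac p / tofrac q.
Proof.
elim/quotW: x => r.
exists (\n_r), (\d_r); split; first exact: denom_ratioP.
rewrite /tofrac. unlock FracField.tofrac.
rewrite -[_^-1]FracField.pi_inv -[_ * _]FracField.pi_mul.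
apply/eqmodP; rewrite /= FracField.equivfE.
rewrite /FracField.mulf /FracField.invf !numden_Ratio ?mul1r ?denom_ratioP ?oner_neq0 //.
by rewrite mulr1 mulrC; apply/eqP. all: exact: oner_neq0.
Qed.

Section Ev.
Variable F : fieldType.
Variable c : F.
Local Notation K := {fraction {poly F}}.

Definition Rep (x : K) (v : F) := exists p q : {poly F},
  q.[c] != 0 /\ x = tofrac p / tofrac q /\ v = p.[c] / q.[c].

Lemma hn0 (q : {poly F}) : q.[c] != 0 -> q != 0.
Proof. by apply: contraNneq => ->; rewrite horner0. Qed.

Lemma tofrac_neq0 (q : {poly F}) : q != 0 -> tofrac q != 0 :> K.
Proof. by rewrite tofrac_eq0. Qed.

Lemma Rep_uniq x v w : Rep x v -> Rep x w -> v = w.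
Proof.
move=> [p [q [Hq [-> ->]]]] [p' [q' [Hq' [E ->]]]].
have /eqP := E; rewrite eqr_div ?tofrac_neq0 ?hn0 // -!tofracM tofrac_eq => /eqP E'.
apply/eqP; rewrite eqr_div //; apply/eqP.
by have := congr1 (horner^~ c) E'; rewrite !hornerM.
Qed.

Definition ev (x : K) : option F :=
  match excluded_middle_informative (exists v, Rep x v) with
  | left H => Some (proj1_sig (constructive_indefinite_description _ H))
  | right _ => None end.

Lemma evS x v : Rep x v -> ev x = Some v.
Proof.
move=> H; rewrite /ev; case: excluded_middle_informative => [H'|[]]; last by exists v.
case: constructive_indefinite_description => w /= Hw.
by rewrite (Rep_uniq Hw H).
Qed.

Lemma evR x v : ev x = Some v -> Rep x v.
Proof.
rewrite /ev; case: excluded_middle_informative => // H.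
by case: constructive_indefinite_description => w /= Hw [<-].
Qed.

Lemma evN x : ev x = None -> forall v, ~ Rep x v.
Proof.
rewrite /ev; case: excluded_middle_informative => // H _ v Hv.
by apply: H; exists v.
Qed.

Lemma Rep_poly (p : {poly F}) : Rep (tofrac p) p.[c].
Proof.
exists p, 1; split; first by rewrite hornerC oner_eq0.
by rewrite tofrac1 divr1 hornerC divr1.
Qed.

Lemma Rep_add x y v w : Rep x v -> Rep y w -> Rep (x + y) (v + w).
Proof.
move=> [p [q [Hq [-> ->]]]] [p' [q' [Hq' [-> ->]]]].
exists (p * q' + p' * q), (q * q'); split; first by rewrite hornerM mulf_neq0.
have h1 := tofrac_neq0 (hn0 Hq); have h2 := tofrac_neq0 (hn0 Hq').
split; first by rewrite tofracD !tofracM (addf_div _ _ h1 h2).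
by rewrite hornerD !hornerM (addf_div _ _ Hq Hq').
Qed.

Lemma Rep_mul x y v w : Rep x v -> Rep y w -> Rep (x * y) (v * w).
Proof.
move=> [p [q [Hq [-> ->]]]] [p' [q' [Hq' [-> ->]]]].
exists (p * p'), (q * q'); split; first by rewrite hornerM mulf_neq0.
have h1 := tofrac_neq0 (hn0 Hq); have h2 := tofrac_neq0 (hn0 Hq').
split; first by rewrite !tofracM mulf_div.
by rewrite !hornerM mulf_div.
Qed.

Lemma Rep_inv x v : Rep x v -> v != 0 -> Rep x^-1 v^-1.
Proof.
move=> [p [q [Hq [-> ->]]]] Hv.
have Hp : p.[c] != 0 by apply: contraNneq Hv => ->; rewrite mul0r.
exists q, p; split; first exact: Hp.
split; by rewrite invf_div.
Qed.

Lemma Rep_inv0 x w : x != 0 -> Rep x 0 -> ~ Rep x^-1 w.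
Proof.
move=> x0 [p [q [Hq [Ex E0]]]] [p' [q' [Hq' [Ex' _]]]].
have Hp : p.[c] = 0.
  by move/eqP: E0; rewrite eq_sym mulf_eq0 invr_eq0 (negPf Hq) orbF => /eqP.
have h1 := tofrac_neq0 (hn0 Hq); have h2 := tofrac_neq0 (hn0 Hq').
have : x * x^-1 = 1 by rewrite (divff x0).
have h3 : tofrac q * tofrac q' != 0 :> K by exact: mulf_neq0 h1 h2.
rewrite {1}Ex Ex' mulf_div => /(congr1 (fun z => z * (tofrac q * tofrac q'))).
rewrite (divfK h3) mul1r -!tofracM => /eqP; rewrite tofrac_eq => /eqP E.
have := congr1 (horner^~ c) E; rewrite !hornerM Hp mul0r => /esym/eqP.
by rewrite mulf_eq0 (negPf Hq) (negPf Hq').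
Qed.

Lemma Rep_none x : x != 0 -> (forall v, ~ Rep x v) -> Rep x^-1 0.
Proof.
move=> x0 HN; have [p [q [qn0 Ex]]] := frac_rep x.
have pn0 : p != 0 by apply: contraNneq x0 => p0; rewrite Ex p0 tofrac0 mul0r.
have [m [p1 Hp1 Ep]] := multiplicity_XsubC p c.
have [k [q1 Hq1 Eq]] := multiplicity_XsubC q c.
rewrite pn0 /= in Hp1; rewrite qn0 /= in Hq1.
move/rootPf: Hp1 => /negbT Hp1; move/rootPf: Hq1 => /negbT Hq1.
set Y := ('X - c%:P) in Ep Eq.
have Yn0 : Y != 0 by rewrite polyXsubC_eq0.
case: (leqP k m) => km.
  exfalso; apply: (HN ((p1 * Y ^+ (m - k)).[c] / q1.[c])).
  exists (p1 * Y ^+ (m - k)), q1; split; first exact: Hq1.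
  split; last reflexivity.
  have hk : tofrac (Y ^+ k) != 0 :> K := tofrac_neq0 (expf_neq0 _ Yn0).
  rewrite Ex Ep Eq -(subnK km) exprD !mulrA [tofrac (_ * Y ^+ k)]tofracM [tofrac (q1 * _)]tofracM.
  by rewrite -mulf_div (divff hk) mulr1 addnK.
exists (q1 * Y ^+ (k - m)), p1; split; first exact: Hp1.
split.
  have hm : tofrac (Y ^+ m) != 0 :> K := tofrac_neq0 (expf_neq0 _ Yn0).
  rewrite Ex Eq Ep -(subnK (ltnW km)) exprD !mulrA invf_div [tofrac (_ * Y ^+ m)]tofracM [tofrac (p1 * _)]tofracM.
  by rewrite -mulf_div (divff hm) mulr1 addnK.
by rewrite hornerM horner_exp /Y hornerXsubC subrr expr0n subn_eq0 leqNgt km mulr0 mul0r.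
Qed.

End Ev.

Lemma place0 (K : fieldType) (z : K -> option R) : is_Rplace z ->
  z 0 = Some 0 /\ z (-1) = Some (-1).
Proof.
move=> [h1 [hadd hinv]].
have [v Hv] : exists v, z (-1) = Some v.
  case E: (z (-1)) => [v|]; first by exists v.
  have hn : (-1 : K) != 0 by rewrite oppr_eq0 oner_eq0.
  have [H _] := hinv _ hn; move: (H E); rewrite invrN1 E; discriminate.
have [h0 _] := hadd _ _ _ _ h1 Hv; rewrite addrN in h0.
have [h00 _] := hadd _ _ _ _ h0 h0; rewrite addr0 h0 in h00; case: h00 => e.
have e' : 1 + v = 0 by lra.
by rewrite h0 e' Hv; split => //; congr Some; lra.
Qed.

Lemma place_nat (K : fieldType) (z : K -> option R) : is_Rplace z ->
  forall n : nat, z n%:R = Some n%:R.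
Proof.
move=> hz; have [z0 _] := place0 hz; have [h1 [hadd _]] := hz.
elim=> [|n IH]; first by rewrite z0.
by have [h _] := hadd _ _ _ _ h1 IH; rewrite mulrS h -mulrS.
Qed.

Section Comp.
Variables (F : fieldType) (c : F) (z : F -> option R).
Hypothesis hz : is_Rplace z.

Definition compz (b : {fraction {poly F}}) : option R :=
  match ev c b with Some g => z g | None => None end.

Lemma compz_place : is_Rplace compz.
Proof.
have [z0 _] := place0 hz; have [h1 [hadd hinv]] := hz.
split.
  rewrite /compz (@evS _ c 1 1) //.
  have := Rep_poly c 1; by rewrite tofrac1 hornerC.
split.
  move=> a b u v; rewrite /compz.
  case Ea: (ev c a) => [g|] // Hg; case Eb: (ev c b) => [h|] // Hh.
  have [Ha Hb] := (evR Ea, evR Eb).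
  rewrite (evS (Rep_add Ha Hb)) (evS (Rep_mul Ha Hb)).
  exact: hadd.
move=> a a0; rewrite /compz.
case Ea: (ev c a) => [g|].
  have Ha := evR Ea.
  have [g0|g0] := eqVneq g 0.
    rewrite g0 z0 in Ha *.
    case Ei: (ev c a^-1) => [h|]; last by split.
    by case: (Rep_inv0 a0 Ha (evR Ei)).
  rewrite (evS (Rep_inv Ha g0)); exact: hinv.
rewrite (evS (Rep_none a0 (evN Ea))) z0; by split.
Qed.
End Comp.

Definition phi (r : R) : Rx := tofrac (r%:P).

Lemma phiD a b : phi (a + b) = phi a + phi b.
Proof. by rewrite /phi polyCD tofracD. Qed.
Lemma phiM a b : phi (a * b) = phi a * phi b.
Proof. by rewrite /phi polyCM tofracM. Qed.
Lemma phiN a : phi (- a) = - phi a.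
Proof. by rewrite /phi polyCN tofracN. Qed.
Lemma phi1 : phi 1 = 1.
Proof. by rewrite /phi tofrac1. Qed.
Lemma phi0 : phi 0 = 0.
Proof. by rewrite /phi tofrac0. Qed.
Lemma phi_eq0 a : (phi a == 0) = (a == 0).
Proof. by rewrite /phi tofrac_eq0 polyC_eq0. Qed.
Lemma phi_nat n : phi n%:R = n%:R.
Proof. by elim: n => [|n IH]; rewrite ?phi0 // mulrS phiD phi1 IH -mulrS. Qed.
Lemma phiV a : phi (a^-1) = (phi a)^-1.
Proof.
have [->|a0] := eqVneq a 0; first by rewrite invr0 phi0 invr0.
have pa : phi a != 0 by rewrite phi_eq0.
apply: (mulfI pa); have e : a * a^-1 = 1 := mulfV a0.
rewrite -phiM mulrV ?unitfE // -phi1; congr phi; exact: e.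
Qed.

Lemma const_fin (z : Rx -> option R) : is_Rplace z -> forall s, z (phi s) <> None.
Proof.
move=> hz s Hs; have [z0 zm1] := place0 hz; have [h1 [hadd hinv]] := hz.
have [s0|s0] := eqVneq s 0; first by rewrite s0 phi0 z0 in Hs.
have ps : phi s != 0 by rewrite phi_eq0.
have Hu : z (phi s^-1) = Some 0 by rewrite phiV; apply/(hinv _ ps).
set n := Num.Def.archi_bound (s * s).
have Hn : s * s < n%:R by apply: archi_boundP; rewrite -expr2 sqr_ge0.
set g := Num.sqrt (n%:R - s * s).
have gp : 0 < g by rewrite sqrtr_gt0 subr_gt0.
have hg : g * g = n%:R - s * s by rewrite -expr2 sqr_sqrtr // subr_ge0 ltW.
have E : (g / s) * (g / s) = n%:R * (s^-1 * s^-1) + (-1).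
  rewrite mulf_div hg; field; exact: s0.
set w := phi (g / s).
have hw : z (w * w) = Some (-1).
  have E' : w * w = phi (n%:R * (s^-1 * s^-1) + (-1)) by rewrite /w -phiM; congr phi; exact: E.
  rewrite E' phiD phiN phi1 phiM phi_nat phiM.
  have [_ h2] := hadd _ _ _ _ Hu Hu.
  have [_ h3] := hadd _ _ _ _ (place_nat hz n) h2.
  have [h4 _] := hadd _ _ _ _ h3 zm1.
  by rewrite h4 !mul0r mulr0 add0r.
case Ew: (z w) => [a|].
  have [_ h] := hadd _ _ _ _ Ew Ew; rewrite hw in h; case: h => h.
  by move: (sqr_ge0 a); rewrite expr2 -h oppr_ge0 ler10.
have w0 : w != 0 by rewrite phi_eq0 mulf_neq0 // ?invr_eq0 // gt_eqF.
have [Hw _] := hinv _ w0; have Hwi := Hw Ew.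
have [_ h] := hadd _ _ _ _ Hwi Hwi; rewrite mul0r -invfM in h.
have ww0 : w * w != 0 := mulf_neq0 w0 w0.
have [_ H] := hinv _ ww0; by rewrite (H h) in hw.
Qed.

Lemma const_nz (z : Rx -> option R) : is_Rplace z -> forall d, d != 0 -> z (phi d) <> Some 0.
Proof.
move=> hz d d0 H; have [_ [_ hinv]] := hz.
have pd : phi d^-1 != 0 by rewrite phi_eq0 invr_eq0.
have [_ H2] := hinv _ pd; have := const_fin hz (s:=d^-1); apply; apply: H2.
by rewrite phiV invrK.
Qed.

Module InjR.
Import classical_sets reals.
Section Inj.
Variable RR : realType.
Definition x3 : RR := 3%:R^-1.
Definition sq (t : nat -> bool) (n : nat) : RR := \sum_(i < n) (t i)%:R * x3 ^+ i.+1.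

Lemma x3_gt0 : 0 < x3. Proof. by rewrite /x3 invr_gt0 ltr0n. Qed.
Lemma x3_step j : x3 ^+ j.+1 = (x3 ^+ j - x3 ^+ j.+1) / 2%:R.
Proof.
rewrite exprS /x3.
have h3 : (3%:R : RR) != 0 by rewrite pnatr_eq0.
have h2 : (2%:R : RR) != 0 by rewrite pnatr_eq0.
by field.
Qed.

Lemma bit_le (b : bool) : 0 <= (b%:R : RR) <= 1.
Proof. by case: b; rewrite ?ler01 ?lexx. Qed.

Lemma sq_S t n : sq t n.+1 = sq t n + (t n)%:R * x3 ^+ n.+1.
Proof. by rewrite /sq big_ord_recr. Qed.

Lemma sq_mono t m d : sq t m <= sq t (m + d).
Proof.
elim: d => [|d IH]; first by rewrite addn0.
rewrite addnS sq_S (le_trans IH) // lerDl mulr_ge0 ?ler0n //.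
by rewrite exprn_ge0 // ltW // x3_gt0.
Qed.

Lemma sq_tail t m d : sq t (m + d) <= sq t m + (x3 ^+ m - x3 ^+ (m + d)) / 2%:R.
Proof.
elim: d => [|d IH]; first by rewrite addn0 subrr mul0r addr0.
rewrite addnS sq_S.
have hb : (t (m + d))%:R * x3 ^+ (m + d).+1 <= x3 ^+ (m + d).+1.
  have [h0 h1] := andP (bit_le (t (m + d))).
  by apply: ler_piMl => //; exact: exprn_ge0 (ltW x3_gt0).
have hs := x3_step (m + d).
lra.
Qed.

Lemma sq_bound t m n : sq t n <= sq t m + x3 ^+ m / 2%:R.
Proof.
have hx : 0 <= x3 ^+ m / 2%:R by rewrite divr_ge0 ?exprn_ge0 ?ler0n // ltW // x3_gt0.
case: (leqP n m) => nm.
  have := sq_mono t n (m - n); rewrite subnKC // => h; lra.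
have := sq_tail t m (n - m); rewrite subnKC ?(ltnW nm) // => h.
have : 0 <= x3 ^+ n by rewrite exprn_ge0 // ltW // x3_gt0.
lra.
Qed.

Definition csup (t : nat -> bool) : RR := sup (fun y => exists n, y = sq t n).

Lemma csup_has t : has_sup (fun y => exists n, y = sq t n).
Proof.
split; first by exists (sq t 0), 0%N.
exists (sq t 0 + x3 ^+ 0 / 2%:R) => y [n ->]; exact: sq_bound.
Qed.

Lemma key (t t' : nat -> bool) (k : nat) : (forall i : nat, leq i.+1 k -> t i = t' i) -> t k = true -> t' k = false ->
  csup t' < csup t.
Proof.
move=> hi htk ht'k.
have P : sq t k = sq t' k by apply: eq_bigr => i _; rewrite hi.
have h1 : sq t k.+1 <= csup t by apply: sup_upper_bound (csup_has t) _ _; exists k.+1.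
have h2 : csup t' <= sq t' k.+1 + x3 ^+ k.+1 / 2%:R.
  apply: ge_sup; first by exists (sq t' 0), 0%N.
  move=> y [n ->]; exact: sq_bound.
rewrite sq_S ht'k mul0r addr0 -P in h2.
rewrite sq_S htk mul1r in h1.
apply: (le_lt_trans h2); apply: (lt_le_trans _ h1); rewrite ltrD2l.
by rewrite gtr_pMr ?exprn_gt0 ?x3_gt0 // invf_lt1 ?ltr0n // ltr1n.
Qed.

Lemma csup_inj : injective csup.
Proof.
move=> t t' E; apply: functional_extensionality => i; apply: NNPP => Hne.
have ex : exists k, t k != t' k by exists i; apply/eqP.
have [k /eqP Hk Hmin] := ex_minnP ex.
have hi : forall j : nat, leq j.+1 k -> t j = t' j.
  move=> j jk; apply/eqP; apply: contraTT jk => hj; rewrite -leqNgt; exact: Hmin.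
case Etk: (t k); case Et'k: (t' k); rewrite ?Etk ?Et'k in Hk => //.
  by have := key hi Etk Et'k; rewrite E ltxx.
have hi' : forall j : nat, leq j.+1 k -> t' j = t j by move=> j /hi ->.
by have := key hi' Et'k Etk; rewrite E ltxx.
Qed.

End Inj.
End InjR.

Section Main.
Variable cc : R.

Definition fmap (z : M Rx) : M Rxy :=
  exist _ (compz (phi cc) (proj1_sig z)) (compz_place (phi cc) (proj2_sig z)).

Lemma ev_emb (g : Rx) : ev (phi cc) (emb_xy g) = Some g.
Proof. by apply: evS; have := Rep_poly (phi cc) g%:P; rewrite hornerC. Qed.

Lemma fmap_compat : compatible_restr fmap.
Proof.
move=> z; apply: functional_extensionality => g.
by rewrite /fmap /= /compz ev_emb.
Qed.

Lemma fmap_inj : injective fmap.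
Proof.
move=> z1 z2 E.
have := fmap_compat z1; rewrite E fmap_compat => e.
apply: eq_sig_hprop => //; move=> x p q; exact: proof_irrelevance.
Qed.

Lemma H'_fmap b z : H' b (fmap z) <-> exists g, ev (phi cc) b = Some g /\ H' g z.
Proof.
rewrite /H' /fmap /= /compz; split.
  case: (ev (phi cc) b) => [g|] [r [Hr r0]] //.
  by exists g; split => //; exists r.
by move=> [g [-> Hg]].
Qed.

Lemma fmap_cont : M_continuous fmap.
Proof.
move=> U hU z Hz.
have [s [Hs1 Hs2]] := hU _ Hz.
exists (map (fun b => odflt 0 (ev (phi cc) b)) s); split.
  move=> b' /mapP [b bs ->].
  have [g [Eg Hg]] := (H'_fmap b z).1 (Hs1 b bs).
  by rewrite Eg.
move=> z' Hz'; apply: Hs2 => b bs.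
have [g [Eg Hg]] := (H'_fmap b z).1 (Hs1 b bs).
apply/H'_fmap; exists g; split => //.
apply: Hz'; apply/mapP; exists b => //; by rewrite Eg.
Qed.
End Main.

Theorem corollary9p3 :
  exists F : (nat -> bool) -> (M Rx -> M Rxy),
    (forall t, M_continuous (F t) /\ injective (F t) /\ compatible_restr (F t)) /\
    (forall t t', t <> t' -> forall z z' : M Rx, F t z <> F t' z').
Proof.
exists (fun t => fmap (InjR.csup _ t)); split.
  move=> t; split; first exact: fmap_cont.
  split; [exact: fmap_inj | exact: fmap_compat].
move=> t t' tt z z' /=.
set a := InjR.csup _ t; set a' := InjR.csup _ t'; move=> E.
have d0 : a' - a != 0.
  rewrite subr_eq0; apply/eqP => e; apply: tt; apply: InjR.csup_inj; exact: (esym e).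
pose b : Rxy := tofrac ('X - (phi a)%:P).
have e1 : ev (phi a) b = Some 0.
  by apply: evS; have := Rep_poly (phi a) ('X - (phi a)%:P); rewrite hornerXsubC subrr.
have e2 : ev (phi a') b = Some (phi (a' - a)).
  apply: evS; have := Rep_poly (phi a') ('X - (phi a)%:P).
  by rewrite hornerXsubC phiD phiN.
have := congr1 (fun m : M Rxy => proj1_sig m b) E.
rewrite /fmap /= /compz e1 e2.
have [z0 _] := place0 (proj2_sig z); rewrite z0.
move=> h; apply: (const_nz (proj2_sig z') d0); by rewrite -h.
Qed.
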